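(* Let $\mathfrak g$ be a nonsemisimple complex Lie algebra, $\mathfrak p$ a nonperfect ideal of $\mathfrak g$, and $\phi:\mathfrak p\to\mathbb C$ a Lie algebra homomorphism. If $\mathfrak g$ admits a bland irreducible quasi-Whittaker module of type $\phi$, then $\phi$ is extendable.
   Context: A Lie algebra homomorphism to $\mathbb C$ is a linear map vanishing on the derived subalgebra. For a $\mathfrak g$-module $V$, $V_\phi=\{v\in V: pv=\phi(p)v\ \forall p\in\mathfrak p\}$ (quasi-Whittaker vectors of type $\phi$); $V$ is a quasi-Whittaker module of type $\phi$ if generated by an element of $V_\phi$; an irreducible such $V$ is bland if $\dim V_\phi=1$. The Whittaker annihilator is $\mathfrak g^{\phi}=\{g\in\mathfrak g:\phi([g,p])=0\ \forall p\in\mathfrak p\}$. $\phi$ is extendable if there is a Lie algebra homomorphism $\phi':\mathfrak g^\phi\to\mathbb C$ with $\phi'|_{\mathfrak p}=\phi$. *)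

(* Defs.v *)
(* Complex numbers are R[i] (mathcomp-real-closed) for a
   realType R; Lie algebras are finite-dimensional vector spaces (vectType)
   with a bracket; modules are arbitrary (possibly infinite-dimensional)
   lmodTypes. *)
From HB Require Import structures.
From mathcomp Require Import all_boot all_order all_algebra.
From mathcomp Require Import reals complex.
Set Implicit Arguments. Unset Strict Implicit. Unset Printing Implicit Defensive.
Import Order.TTheory GRing.Theory Num.Theory.
Local Open Scope ring_scope.

Section LieDefs.
Variable K : fieldType.

Definition lie_bracket (g : lmodType K) (br : g -> g -> g) : Prop :=
  [/\ (forall (a : K) (x y z : g), br (a *: x + y) z = a *: br x z + br y z),
      (forall (a : K) (x y z : g), br z (a *: x + y) = a *: br z x + br z y),
      (forall x : g, br x x = 0) &
      (forall x y z : g, br x (br y z) + br y (br z x) + br z (br x y) = 0)].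

Variable g : vectType K.
Variable br : g -> g -> g.

(* the derived subspace [U,U] = span of all brackets of elements of U
   (by bilinearity it is spanned by brackets of basis vectors) *)
Definition derived (U : {vspace g}) : {vspace g} :=
  <<allpairs br (vbasis U) (vbasis U)>>%VS.

Definition is_ideal (I : {vspace g}) : Prop :=
  forall x y : g, y \in I -> br x y \in I.

Definition derived_series (I : {vspace g}) (k : nat) : {vspace g} :=
  iter k derived I.

Definition solvable_ideal (I : {vspace g}) : Prop :=
  exists k : nat, derived_series I k = 0%VS.

Definition semisimple : Prop :=
  forall I : {vspace g}, is_ideal I -> solvable_ideal I -> I = 0%VS.

Definition perfect (U : {vspace g}) : Prop := derived U = U.

Definition lie_hom_to_field (U : {vspace g}) (f : {linear subvs_of U -> K^o}) : Prop :=
  forall x : subvs_of U, vsval x \in derived U -> f x = 0.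

Definition is_whittaker_annihilator (P : {vspace g})
    (phi : {linear subvs_of P -> K^o}) (G : {vspace g}) : Prop :=
  forall x : g, x \in G <->
    (forall p : subvs_of P, phi (vsproj P (br x (vsval p))) = 0).

Definition extendable (P : {vspace g}) (phi : {linear subvs_of P -> K^o}) : Prop :=
  exists G : {vspace g}, is_whittaker_annihilator phi G /\
  exists phi' : {linear subvs_of G -> K^o},
    lie_hom_to_field phi' /\
    (forall p : subvs_of P, phi' (vsproj G (vsval p)) = phi p).

Variable V : lmodType K.
Variable act : g -> V -> V.

Definition lie_module : Prop :=
  [/\ (forall (a : K) (x y : g) (v : V), act (a *: x + y) v = a *: act x v + act y v),
      (forall (a : K) (x : g) (v w : V), act x (a *: v + w) = a *: act x v + act x w) &
      (forall (x y : g) (v : V), act (br x y) v = act x (act y v) - act y (act x v))].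

Definition submodule (S : V -> Prop) : Prop :=
  [/\ S 0,
      (forall (a : K) (v w : V), S v -> S w -> S (a *: v + w)) &
      (forall (x : g) (v : V), S v -> S (act x v))].

Definition irreducible_module : Prop :=
  (exists v : V, v <> 0) /\
  forall S : V -> Prop, submodule S -> (forall v, S v -> v = 0) \/ (forall v, S v).

Definition generates (w : V) : Prop :=
  forall S : V -> Prop, submodule S -> S w -> forall v, S v.

Variable P : {vspace g}.
Variable phi : {linear subvs_of P -> K^o}.

Definition qw_vector (v : V) : Prop :=
  forall p : subvs_of P, act (vsval p) v = phi p *: v.

Definition quasi_whittaker_module : Prop :=
  exists w : V, qw_vector w /\ generates w.

Definition qw_space_dim1 : Prop :=
  exists w : V, w <> 0 /\ qw_vector w /\
    forall v : V, qw_vector v -> exists c : K, v = c *: w.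

Definition bland_irreducible_qw_module : Prop :=
  [/\ irreducible_module, quasi_whittaker_module & qw_space_dim1].
End LieDefs.

(* Main.v *)
Require Import Defs.
From HB Require Import structures.
From mathcomp Require Import all_boot all_order all_algebra.
From mathcomp Require Import reals complex.
Import GRing.Theory.
Local Open Scope ring_scope.
Set Implicit Arguments. Unset Strict Implicit. Unset Printing Implicit Defensive.

Definition mkLin (K : fieldType) (U W : lmodType K) (f : U -> W)
  (H : linear f) : {linear U -> W} :=
  HB.pack f (GRing.isLinear.Build K U W *:%R f H).

Lemma lin_sum (K : fieldType) (U W : lmodType K) (f : U -> W) (H : linear f)
  n (a : 'I_n -> K) (v : 'I_n -> U) :
  f (\sum_i a i *: v i) = \sum_i a i *: f (v i).
Proof.
have -> : f (\sum_i a i *: v i) = mkLin H (\sum_i a i *: v i) by [].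
rewrite linear_sum; apply: eq_bigr => i _; exact: linearZ.
Qed.

Section Main.
Variable K : fieldType.
Variable g : vectType K.
Variable br : g -> g -> g.
Variable P : {vspace g}.
Variable phi : {linear subvs_of P -> K^o}.
Variable V : lmodType K.
Variable act : g -> V -> V.
Hypothesis hbr : lie_bracket br.
Hypothesis hP : is_ideal br P.
Hypothesis hphi : lie_hom_to_field br phi.
Hypothesis hmod : lie_module br act.

Lemma brl_lin z : linear (fun x => br x z).
Proof. case: hbr => H _ _ _ a x y; exact: H. Qed.
Lemma brr_lin z : linear (br z).
Proof. case: hbr => _ H _ _ a x y; exact: H. Qed.
Lemma actl_lin v : linear (fun x => act x v).
Proof. case: hmod => H _ _ a x y; exact: H. Qed.
Lemma actr_lin x : linear (act x).
Proof. case: hmod => _ H _ a v w; exact: H. Qed.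

Lemma br_anti x y : br y x = - br x y.
Proof.
case: hbr => _ _ H0 _.
have := H0 (x + y).
have E1 : br (x + y) (x + y) = mkLin (brl_lin (x + y)) (x + y) by [].
rewrite E1 linearD /= .
have E2 : br x (x + y) = mkLin (brr_lin x) (x + y) by [].
have E3 : br y (x + y) = mkLin (brr_lin y) (x + y) by [].
rewrite E2 E3 !linearD /= !H0 add0r addr0 => /eqP; rewrite addr_eq0 => /eqP.
by move=> ->; rewrite opprK.
Qed.

Lemma derived_mem (U : {vspace g}) x y : x \in U -> y \in U ->
  br x y \in derived br U.
Proof.
move=> xU yU; rewrite (coord_vbasis xU).
have E : forall u, br u y = mkLin (brl_lin y) u by [].
rewrite E linear_sum; apply: memv_suml => i _; rewrite linearZ /=.
apply: memvZ; rewrite (coord_vbasis yU) (lin_sum (brr_lin _)).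
apply: memv_suml => j _; apply: memvZ; apply: memv_span.
by apply: allpairs_f; apply: mem_nth; rewrite size_tuple.
Qed.

Definition nP := \dim P.
Definition F (x : g) : 'rV[K]_nP :=
  \row_(i < nP) (phi (vsproj P (br x (vbasis P)`_i)) : K).

Lemma F_lin : linear F.
Proof.
move=> a x y; apply/rowP => i; rewrite !mxE.
have E : forall u, br u (vbasis P)`_i = mkLin (brl_lin (vbasis P)`_i) u by [].
by rewrite E linearP linearP linearP.
Qed.

Definition G : {vspace g} := lker (linfun (mkLin F_lin)).

Lemma memG x : x \in G <->
  (forall p : subvs_of P, phi (vsproj P (br x (vsval p))) = 0).
Proof.
rewrite /G memv_ker lfunE /=; split.
  move/eqP/rowP => H p.
  rewrite (coord_vbasis (subvsP p)) (lin_sum (brr_lin _)) !linear_sum big1 //.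
  move=> i _; rewrite !linearZ /=.
  have := H i; rewrite !mxE => ->; exact: mulr0.
move=> H; apply/eqP/rowP => i; rewrite !mxE.
have := H (vsproj P (vbasis P)`_i).
rewrite vsprojK // vbasis_mem // mem_nth // size_tuple //.
Qed.

Variable w : V.
Hypothesis wn0 : w <> 0.
Hypothesis wqw : qw_vector act phi w.
Hypothesis wuniq : forall v : V, qw_vector act phi v -> exists c : K, v = c *: w.

Lemma act_scale x (c : K) v : act x (c *: v) = c *: act x v.
Proof. exact: (GRing.scalable_linear (actr_lin x)). Qed.

Lemma key x : x \in G -> qw_vector act phi (act x w).
Proof.
move=> /memG xG p.
case: hmod => _ _ Hb.
have Hp := Hb (vsval p) x w.
have : act (vsval p) (act x w) = act (br (vsval p) x) w + act x (act (vsval p) w).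
  by rewrite Hp subrK.
move=> ->; rewrite wqw act_scale.
have Pm : br (vsval p) x \in P by rewrite br_anti rpredN; apply: hP; exact: subvsP.
have := wqw (vsproj P (br (vsval p) x)); rewrite vsprojK // => ->.
rewrite br_anti linearN linearN /= xG oppr0 scale0r add0r //.
Qed.

Lemma exG x : x \in G -> exists c, act x w = c *: w.
Proof. by move=> /key /wuniq. Qed.

Lemma uniqc (c1 c2 : K) : c1 *: w = c2 *: w -> c1 = c2.
Proof.
move=> /eqP; rewrite -subr_eq0 -scalerBl scaler_eq0 subr_eq0 => /orP [/eqP //|/eqP].
by move=> /wn0.
Qed.

Lemma exc (x : subvs_of G) : exists c : K, act (vsval x) w == c *: w.
Proof. by case: (exG (subvsP x)) => c Hc; exists c; apply/eqP. Qed.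

Definition c (x : subvs_of G) : K^o := xchoose (exc x).
Lemma cP x : act (vsval x) w = c x *: w.
Proof. exact/eqP/(xchooseP (exc x)). Qed.

Lemma c_lin : linear c.
Proof.
move=> a x y; apply: uniqc.
rewrite -cP linearP /=. idtac.
case: hmod => H _ _; rewrite H !cP scalerDl scalerA //.
Qed.

Lemma extG : extendable br phi.
Proof.
exists G; split; first by move=> x; exact: memG.
exists (mkLin c_lin); split.
  move=> x Hx; apply: uniqc; rewrite scale0r /= -cP.
  move: Hx; rewrite /derived.
  set s := allpairs _ _ _ => Hs.
  have := coord_span (X := in_tuple s) Hs => ->.
  rewrite (lin_sum (actl_lin w)) big1 // => i _.
  have : (in_tuple s)`_i \in s by apply: mem_nth; exact: ltn_ord.
  case/allpairsP => [[b1 b2] /= [b1m b2m ->]].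
  case: hmod => _ _ Hb; rewrite Hb.
  case: (exG (vbasis_mem b1m)) => c1 E1.
  case: (exG (vbasis_mem b2m)) => c2 E2.
  by rewrite E2 E1 !act_scale E1 E2 !scalerA mulrC subrr scaler0.
move=> p.
have pG : vsval p \in G.
  apply/memG => q; apply: hphi; rewrite vsprojK; last first.
    by apply: hP; exact: subvsP.
  by apply: derived_mem; exact: subvsP.
apply: uniqc; rewrite /= -cP vsprojK //; exact: wqw.
Qed.
End Main.

Theorem lemma3p6 (R : realType) (g : vectType R[i]) (br : g -> g -> g)
  (P : {vspace g}) (phi : {linear subvs_of P -> R[i]^o})
  (V : lmodType R[i]) (act : g -> V -> V) :
  lie_bracket br ->
  ~ semisimple br ->
  is_ideal br P ->
  ~ perfect br P ->
  lie_hom_to_field br phi ->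
  lie_module br act ->
  bland_irreducible_qw_module act phi ->
  extendable br phi.
Proof.
move=> hbr _ hP _ hphi hmod [_ _ [w [wn0 [wqw wuniq]]]].
exact: (extG hbr hP hphi hmod wn0 wqw wuniq).
Qed.
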